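(* Let $T$ be a first-order theory and $p(\bar x)$ a type over $T$. For all sentences $\varphi,\sigma$: $(\varphi\to\sigma)\in[T]^p_\infty$ if and only if $\sigma\in[T+\varphi]^p_\infty$.
   Context: $p(\bar x)$ is a set of formulas with free variables among $\bar x$, consistent with $T$. For a theory $S$, $\mathrm{Th}(S)$ is its set of first-order consequences; $(S)^p=\{\neg\exists\bar x\varphi(\bar x): S\models\forall\bar x(\varphi(\bar x)\to\psi(\bar x))\text{ for all }\psi\in p\}$; $[S]^p=\mathrm{Th}(S+(S)^p)$. Recursively: $[S]^p_0=\mathrm{Th}(S)$, $[S]^p_{\alpha+1}=[[S]^p_\alpha]^p$, $[S]^p_\lambda=\bigcup_{\alpha<\lambda}[S]^p_\alpha$ for limit $\lambda$, and $[S]^p_\infty=\bigcup_{\alpha\in\mathrm{Ord}}[S]^p_\alpha$. *)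

(* Defs.v *)
From Stdlib Require Import List.
From Stdlib Require Vectors.Fin.

Set Implicit Arguments.

(** Signatures: function and relation symbols with arities
    (constants are 0-ary function symbols). *)
Record signature := {
  funcs : Type; fun_ar : funcs -> nat;
  rels : Type;  rel_ar : rels -> nat }.

Section FOL.
Variable Sg : signature.

Inductive term : Type :=
  | tvar : nat -> term
  | tapp : forall f : funcs Sg, (Fin.t (fun_ar Sg f) -> term) -> term.

Inductive formula : Type :=
  | FFal : formula
  | FEq  : term -> term -> formula
  | FRel : forall r : rels Sg, (Fin.t (rel_ar Sg r) -> term) -> formula
  | FNeg : formula -> formula
  | FImp : formula -> formula -> formula
  | FAnd : formula -> formula -> formula
  | FOr  : formula -> formula -> formula
  | FAll : nat -> formula -> formula
  | FEx  : nat -> formula -> formula.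

Record structure := {
  dom : Type;
  dom_inh : dom;
  ifun : forall f : funcs Sg, (Fin.t (fun_ar Sg f) -> dom) -> dom;
  irel : forall r : rels Sg, (Fin.t (rel_ar Sg r) -> dom) -> Prop }.

Fixpoint teval (M : structure) (a : nat -> dom M) (t : term) : dom M :=
  match t with
  | tvar n => a n
  | tapp f args => ifun M f (fun i => teval M a (args i))
  end.

Definition update (M : structure) (a : nat -> dom M) (x : nat) (d : dom M)
  : nat -> dom M := fun y => if PeanoNat.Nat.eqb y x then d else a y.

Fixpoint sat (M : structure) (a : nat -> dom M) (phi : formula) : Prop :=
  match phi with
  | FFal => False
  | FEq t1 t2 => teval M a t1 = teval M a t2
  | FRel r args => irel M r (fun i => teval M a (args i))
  | FNeg p => ~ sat M a p
  | FImp p q => sat M a p -> sat M a q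
  | FAnd p q => sat M a p /\ sat M a q
  | FOr p q => sat M a p \/ sat M a q
  | FAll x p => forall d : dom M, sat M (update M a x d) p
  | FEx x p => exists d : dom M, sat M (update M a x d) p
  end.

(** Free variables: [fv_in P phi] means every free variable of phi satisfies P. *)
Fixpoint tvars_in (P : nat -> Prop) (t : term) : Prop :=
  match t with
  | tvar n => P n
  | tapp f args => forall i, tvars_in P (args i)
  end.

Fixpoint fv_in (P : nat -> Prop) (phi : formula) : Prop :=
  match phi with
  | FFal => True
  | FEq t1 t2 => tvars_in P t1 /\ tvars_in P t2
  | FRel r args => forall i, tvars_in P (args i)
  | FNeg p => fv_in P p
  | FImp p q | FAnd p q | FOr p q => fv_in P p /\ fv_in P q
  | FAll x p | FEx x p => fv_in (fun y => y = x \/ P y) p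
  end.

Definition sentence (phi : formula) : Prop := fv_in (fun _ => False) phi.

Definition formula_in (xs : list nat) (phi : formula) : Prop :=
  fv_in (fun y => In y xs) phi.

Definition fset := formula -> Prop.

Definition entails (S : fset) (chi : formula) : Prop :=
  forall (M : structure) (a : nat -> dom M),
    (forall s, S s -> sat M a s) -> sat M a chi.

Definition Th (S : fset) : fset := fun chi => sentence chi /\ entails S chi.

Definition add (S : fset) (phi : formula) : fset := fun s => S s \/ s = phi.
Definition union (S S' : fset) : fset := fun s => S s \/ S' s.

Definition forall_tuple (xs : list nat) (phi : formula) : formula :=
  fold_right FAll phi xs.
Definition exists_tuple (xs : list nat) (phi : formula) : formula :=
  fold_right FEx phi xs.

Definition is_type_over (T : fset) (xs : list nat) (p : fset) : Prop :=
  (forall psi, p psi -> formula_in xs psi) /\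
  exists (M : structure) (a : nat -> dom M),
    (forall s, T s -> sat M a s) /\ (forall psi, p psi -> sat M a psi).

Definition omit_p (xs : list nat) (p : fset) (S : fset) : fset :=
  fun chi => exists phi, formula_in xs phi /\
    (forall psi, p psi -> entails S (forall_tuple xs (FImp phi psi))) /\
    chi = FNeg (exists_tuple xs phi).

Definition brack_p (xs : list nat) (p : fset) (S : fset) : fset :=
  Th (union S (omit_p xs p S)).

(** Transfinite iteration along ordinals, represented by well-orders. *)
Definition well_order (W : Type) (lt : W -> W -> Prop) : Prop :=
  well_founded lt /\
  (forall u v w, lt u v -> lt v w -> lt u w) /\
  (forall u v, lt u v \/ u = v \/ lt v u).

Definition seteq (A B : fset) : Prop := forall chi, A chi <-> B chi.

(** s is the sequence of stages along (W, lt):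
    s 0 = base, s (v+1) = F (s v), s lambda = union_{v < lambda} s v. *)
Definition stages (W : Type) (lt : W -> W -> Prop) (base : fset)
    (F : fset -> fset) (s : W -> fset) : Prop :=
  forall w,
    ((forall v, ~ lt v w) -> seteq (s w) base) /\
    (forall v, lt v w -> (forall u, ~ (lt v u /\ lt u w)) -> seteq (s w) (F (s v))) /\
    ((exists v, lt v w) -> (forall v, lt v w -> exists u, lt v u /\ lt u w) ->
       seteq (s w) (fun chi => exists v, lt v w /\ s v chi)).

Definition brack_inf (xs : list nat) (p : fset) (S : fset) : fset :=
  fun chi => exists (W : Type) (lt : W -> W -> Prop) (s : W -> fset) (w : W),
    well_order lt /\ stages lt (Th S) (brack_p xs p) s /\ s w chi.

End FOL.

(* Main.v *)
Require Import Defs.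
From Stdlib Require Import List.
From Stdlib Require Import FunctionalExtensionality Classical.

Section Proofs.
Variable Sg : signature.

Lemma teval_agree (M : structure Sg) (P : nat -> Prop) (a b : nat -> dom M) (t : term Sg) :
  tvars_in P t -> (forall n, P n -> a n = b n) -> teval M a t = teval M b t.
Proof.
  intros Ht Hab. revert Ht. induction t as [n|f args IH]; simpl; intros Ht.
  - auto.
  - f_equal. apply functional_extensionality. intro i. apply IH; auto.
Qed.

Lemma sat_agree (M : structure Sg) : forall (phi : formula Sg) (P : nat -> Prop) (a b : nat -> dom M),
  fv_in P phi -> (forall n, P n -> a n = b n) -> (sat M a phi <-> sat M b phi).
Proof.
  induction phi; intros P a b Hf Hab; simpl in *.
  - tauto.
  - destruct Hf as [H1 H2].
    rewrite (teval_agree M P a b t H1 Hab), (teval_agree M P a b t0 H2 Hab). tauto.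
  - assert (E: (fun i => teval M a (t i)) = (fun i => teval M b (t i))).
    { apply functional_extensionality; intro i. apply (teval_agree M P); auto. }
    rewrite E; tauto.
  - pose proof (IHphi P a b Hf Hab); tauto.
  - destruct Hf as [H1 H2].
    pose proof (IHphi1 P a b H1 Hab); pose proof (IHphi2 P a b H2 Hab); tauto.
  - destruct Hf as [H1 H2].
    pose proof (IHphi1 P a b H1 Hab); pose proof (IHphi2 P a b H2 Hab); tauto.
  - destruct Hf as [H1 H2].
    pose proof (IHphi1 P a b H1 Hab); pose proof (IHphi2 P a b H2 Hab); tauto.
  - assert (Hag : forall d y, (y = n \/ P y) -> update M a n d y = update M b n d y).
    { intros d y [->|Hy]; unfold update.
      - rewrite PeanoNat.Nat.eqb_refl; reflexivity.
      - destruct (PeanoNat.Nat.eqb y n); auto. }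
    split; intros H d;
      [apply (proj1 (IHphi _ _ _ Hf (Hag d))) | apply (proj2 (IHphi _ _ _ Hf (Hag d)))];
      apply H.
  - assert (Hag : forall d y, (y = n \/ P y) -> update M a n d y = update M b n d y).
    { intros d y [->|Hy]; unfold update.
      - rewrite PeanoNat.Nat.eqb_refl; reflexivity.
      - destruct (PeanoNat.Nat.eqb y n); auto. }
    split; intros [d H]; exists d;
      [apply (proj1 (IHphi _ _ _ Hf (Hag d))) | apply (proj2 (IHphi _ _ _ Hf (Hag d)))];
      apply H.
Qed.

Lemma sentence_indep (M : structure Sg) (phi : formula Sg) a b :
  sentence phi -> (sat M a phi <-> sat M b phi).
Proof.
  intro H. apply (sat_agree M phi (fun _ => False)); [exact H | intros n []].
Qed.

Lemma tvars_mono (t : term Sg) : forall (P Q : nat -> Prop),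
  tvars_in P t -> (forall n, P n -> Q n) -> tvars_in Q t.
Proof.
  induction t as [n|f args IH]; simpl; intros P Q Ht HPQ; auto.
  intro i. apply (IH i P); auto.
Qed.

Lemma fv_mono (phi : formula Sg) : forall (P Q : nat -> Prop),
  fv_in P phi -> (forall n, P n -> Q n) -> fv_in Q phi.
Proof.
  induction phi; simpl; intros P Q H HPQ;
    try (destruct H; split); try (intro i); eauto using tvars_mono;
    (eapply IHphi; [eassumption|]; simpl; intros y [?|?]; auto).
Qed.

Lemma ft_mono (M : structure Sg) (A B : formula Sg) :
  (forall b, sat M b A -> sat M b B) ->
  forall l a, sat M a (forall_tuple l A) -> sat M a (forall_tuple l B).
Proof.
  intros H l. unfold forall_tuple. induction l; simpl; intros a0 Ha; auto.
  all: intro d; apply IHl; apply Ha.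
Qed.

Lemma ft_valid (M : structure Sg) (A : formula Sg) :
  (forall b, sat M b A) -> forall l a, sat M a (forall_tuple l A).
Proof.
  intros H l. unfold forall_tuple. induction l; simpl; intros a0; auto.
Qed.

Lemma et_mono (M : structure Sg) (A B : formula Sg) :
  (forall b, sat M b A -> sat M b B) ->
  forall l a, sat M a (exists_tuple l A) -> sat M a (exists_tuple l B).
Proof.
  intros H l. unfold exists_tuple. induction l; simpl; intros a0 Ha; auto.
  all: destruct Ha as [d Hd]; exists d; apply IHl; apply Hd.
Qed.

Definition equiv (S S' : fset Sg) : Prop :=
  forall (M : structure Sg) a, (forall s, S s -> sat M a s) <-> (forall s, S' s -> sat M a s).

Lemma equiv_trans A B C : equiv A B -> equiv B C -> equiv A C.
Proof. intros H1 H2 M a. rewrite (H1 M a). apply H2. Qed.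

Lemma entails_equiv S S' chi : equiv S S' -> (entails S chi <-> entails S' chi).
Proof.
  intro E; unfold entails; split; intros H M a Hs; apply H;
    [apply (proj2 (E M a)) | apply (proj1 (E M a))]; exact Hs.
Qed.

Variable vs : list nat.
Variable p : fset Sg.

Lemma omit_equiv S S' : equiv S S' -> seteq (omit_p vs p S) (omit_p vs p S').
Proof.
  intros E chi; unfold omit_p; split; intros [th [H1 [H2 H3]]]; exists th;
    repeat split; auto; intros psi Hp; apply (entails_equiv _ _ _ E); auto.
Qed.

Lemma union_equiv A A' B B' : equiv A A' -> equiv B B' -> equiv (union A B) (union A' B').
Proof.
  intros E1 E2 M a. specialize (E1 M a). specialize (E2 M a). unfold union. split; intros H.
  - assert (HA: forall s, A s -> sat M a s) by auto.
    assert (HB: forall s, B s -> sat M a s) by auto.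
    pose proof (proj1 E1 HA). pose proof (proj1 E2 HB). intros s [|]; auto.
  - assert (HA: forall s, A' s -> sat M a s) by auto.
    assert (HB: forall s, B' s -> sat M a s) by auto.
    pose proof (proj2 E1 HA). pose proof (proj2 E2 HB). intros s [|]; auto.
Qed.

Lemma seteq_equiv A B : seteq A B -> equiv A B.
Proof.
  intros E M a; split; intros H s Hs; apply H; apply E; auto.
Qed.

Lemma Th_equiv S S' : equiv S S' -> seteq (Th S) (Th S').
Proof.
  intros E chi; unfold Th; split; intros [H1 H2]; split; auto;
    [apply (proj1 (entails_equiv _ _ _ E)) | apply (proj2 (entails_equiv _ _ _ E))]; auto.
Qed.

Lemma brack_equiv S S' : equiv S S' -> seteq (brack_p vs p S) (brack_p vs p S').
Proof.
  intro E. unfold brack_p. apply Th_equiv. apply union_equiv; auto.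
  apply seteq_equiv; apply omit_equiv; auto.
Qed.

Lemma brack_seteq S S' : seteq S S' -> seteq (brack_p vs p S) (brack_p vs p S').
Proof. intro; apply brack_equiv, seteq_equiv; auto. Qed.

Definition Inv (X : fset Sg) : Prop :=
  (forall chi, X chi -> sentence chi) /\
  (forall chi chi', X chi -> sentence chi' ->
      (forall (M : structure Sg) a, sat M a chi -> sat M a chi') -> X chi') /\
  (forall chi, sentence chi -> (forall (M : structure Sg) a, sat M a chi) -> X chi).

Lemma Inv_Th S : Inv (Th S).
Proof.
  unfold Inv, Th; split; [|split].
  - intros chi [H _]; auto.
  - intros chi chi' [_ H1] H2 H3. split; auto. intros M a Hs. apply H3. apply H1; auto.
  - intros chi H0 H. split; auto. intros M a _. apply H.
Qed.

Lemma Inv_seteq X Y : seteq X Y -> Inv Y -> Inv X.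
Proof.
  intros E [I1 [I2 I3]]; split; [|split].
  - intros chi H; apply I1, E; auto.
  - intros chi chi' H1 H2 H3; apply E; apply (I2 chi); auto; apply E; auto.
  - intros chi H1 H2; apply E; auto.
Qed.

Definition sp (phi : formula Sg) (X : fset Sg) : fset Sg :=
  fun chi => sentence chi /\ X (FImp phi chi).

Lemma sp_equiv phi X : sentence phi -> Inv X -> equiv (sp phi X) (add X phi).
Proof.
  intros Hphi [I1 [I2 I3]] M a. unfold sp, add. split; intros H.
  - intros s [Hs| ->].
    + apply (H s). split; auto. apply (I2 s); auto.
      * split; [exact Hphi | apply I1; auto].
      * simpl; auto.
    + assert (Hx: sentence phi /\ X (FImp phi phi)).
      { split; auto. apply I3. split; auto. intros; simpl; auto. }
      apply H in Hx. exact Hx.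
  - intros s [Hs1 Hs2]. assert (H1: sat M a (FImp phi s)) by (apply H; auto).
    simpl in H1. apply H1. apply H; auto.
Qed.

Lemma deduction (S : fset Sg) (phi chi : formula Sg) : entails (add S phi) chi <-> entails S (FImp phi chi).
Proof.
  unfold entails, add; split; intros H M a Hs.
  - simpl; intro Hp. apply H. intros s [Hs'| ->]; auto.
  - assert (H1 := H M a (fun s Hs' => Hs s (or_introl Hs'))). simpl in H1.
    apply H1. apply Hs; auto.
Qed.

Lemma key phi X : sentence phi ->
  equiv (union (add X phi) (omit_p vs p (add X phi))) (add (union X (omit_p vs p X)) phi).
Proof.
  intros Hphi M a. unfold union, add. split; intros H.
  - assert (Hpa : sat M a phi) by (apply H; auto).
    intros s [[Hs|Hs]| ->]; auto.
    destruct Hs as [th [Hth [Hent ->]]].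
    apply H. right. exists th. split; [exact Hth|]. split; [|reflexivity].
    intros psi Hp. intros N b HX. apply Hent; auto.
  - assert (Hpa : sat M a phi) by (apply H; auto).
    intros s [[Hs| ->]|Hs]; auto.
    destruct Hs as [th [Hth [Hent ->]]].
    assert (Hom : sat M a (FNeg (exists_tuple vs (FAnd th phi)))).
    { apply H. left. right. exists (FAnd th phi). split; [|split; [|reflexivity]].
      - split; auto. eapply fv_mono; [exact Hphi | intros n []].
      - intros psi Hp N b HX.
        destruct (classic (sat N b phi)) as [Hb|Hb].
        + assert (Hft : sat N b (forall_tuple vs (FImp th psi))).
          { apply Hent; auto. intros s [Hs| ->]; auto. }
          eapply ft_mono; [|exact Hft]. simpl. intros b' H1 [H2 _]; auto.
        + apply ft_valid. intros b'. simpl. intros [_ H2].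
          exfalso; apply Hb. apply (sentence_indep N phi b' b Hphi); auto. }
    simpl in Hom |- *. intro He. apply Hom.
    eapply et_mono; [|exact He]. simpl. intros b' Hb'. split; auto.
    apply (sentence_indep M phi a b' Hphi); auto.
Qed.

Lemma succ_lemma phi X chi : sentence phi -> Inv X ->
  (brack_p vs p (sp phi X) chi <-> (sentence chi /\ brack_p vs p X (FImp phi chi))).
Proof.
  intros Hphi HI.
  assert (E : equiv (union (sp phi X) (omit_p vs p (sp phi X)))
                    (add (union X (omit_p vs p X)) phi)).
  { eapply equiv_trans; [|apply key; auto].
    apply union_equiv. apply sp_equiv; auto.
    apply seteq_equiv, omit_equiv, sp_equiv; auto. }
  unfold brack_p at 1. rewrite (Th_equiv _ _ E chi). unfold brack_p, Th.
  rewrite deduction. split.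
  - intros [H1 H2]; repeat split; auto.
  - intros [H1 [[_ _] H2]]; auto.
Qed.

Section Stages.
Variable W : Type.
Variable lt : W -> W -> Prop.

Lemma classify w :
  (forall v, ~ lt v w) \/
  (exists v, lt v w /\ forall u, ~ (lt v u /\ lt u w)) \/
  ((exists v, lt v w) /\ forall v, lt v w -> exists u, lt v u /\ lt u w).
Proof.
  destruct (classic (exists v, lt v w)) as [Hex|Hn].
  - destruct (classic (exists v, lt v w /\ forall u, ~ (lt v u /\ lt u w))) as [Hs|Hns].
    + right; left; auto.
    + right; right; split; auto. intros v Hv.
      apply NNPP. intro Hc. apply Hns. exists v. split; auto.
      intros u Hu. apply Hc. exists u; auto.
  - left. intros v Hv. apply Hn. exists v; auto.
Qed.

Lemma stages_Inv (s : W -> fset Sg) T :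
  well_founded lt -> stages lt (Th T) (brack_p vs p) s -> forall w, Inv (s w).
Proof.
  intros Hwf Hst w. induction w as [w IH] using (well_founded_ind Hwf).
  destruct (Hst w) as [B [Sc L]].
  destruct (classify w) as [H|[[v [Hv Hm]]|[Hex Hl]]].
  - eapply Inv_seteq; [apply B; auto | apply Inv_Th].
  - eapply Inv_seteq; [apply (Sc v); auto | apply Inv_Th].
  - eapply Inv_seteq; [apply L; auto|].
    destruct Hex as [v0 Hv0].
    repeat split.
    + intros chi [v [Hv Hc]]. apply (IH v Hv); auto.
    + intros chi chi' [v [Hv Hc]] H1 H2. exists v; split; auto.
      apply (proj1 (proj2 (IH v Hv)) chi); auto.
    + intros chi H1 H2. exists v0; split; auto. apply (IH v0 Hv0); auto.
Qed.

Lemma stages_sp (s : W -> fset Sg) T phi :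
  sentence phi -> well_founded lt -> stages lt (Th T) (brack_p vs p) s ->
  stages lt (Th (add T phi)) (brack_p vs p) (fun w => sp phi (s w)).
Proof.
  intros Hphi Hwf Hst w. destruct (Hst w) as [B [Sc L]]. split; [|split].
  - intros Hn chi. unfold sp. cbv beta. rewrite (B Hn (FImp phi chi)). unfold Th. cbv beta. rewrite deduction.
    split; [intros [H1 [_ H2]]; auto | intros [H1 H2]; repeat split; auto].
  - intros v Hv Hm chi. rewrite (succ_lemma phi (s v) chi Hphi (stages_Inv s T Hwf Hst v)).
    unfold sp. cbv beta. rewrite (Sc v Hv Hm (FImp phi chi)). tauto.
  - intros Hex Hl chi. unfold sp. cbv beta. rewrite (L Hex Hl (FImp phi chi)). split.
    + intros [H1 [v [Hv H2]]]; exists v; auto.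
    + intros [v [Hv [H1 H2]]]; split; auto; exists v; auto.
Qed.

Lemma stages_unique (base : fset Sg) F s1 s2 :
  well_founded lt -> (forall X Y, seteq X Y -> seteq (F X) (F Y)) ->
  stages lt base F s1 -> stages lt base F s2 -> forall w, seteq (s1 w) (s2 w).
Proof.
  intros Hwf HF H1 H2 w. induction w as [w IH] using (well_founded_ind Hwf).
  destruct (H1 w) as [B1 [S1 L1]]. destruct (H2 w) as [B2 [S2 L2]].
  destruct (classify w) as [H|[[v [Hv Hm]]|[Hex Hl]]]; intro chi.
  - rewrite (B1 H chi), (B2 H chi). tauto.
  - rewrite (S1 v Hv Hm chi), (S2 v Hv Hm chi). apply HF. apply IH; auto.
  - rewrite (L1 Hex Hl chi), (L2 Hex Hl chi). split; intros [u [Hu Hc]]; exists u; split; auto;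
      apply (IH u Hu); auto.
Qed.

Definition step (base : fset Sg) (F : fset Sg -> fset Sg) (w : W)
  (rec : forall v, lt v w -> fset Sg) : fset Sg := fun chi =>
  ((forall v, ~ lt v w) /\ base chi) \/
  (exists v (H : lt v w), (forall u, ~ (lt v u /\ lt u w)) /\ F (rec v H) chi) \/
  ((exists v, lt v w) /\ (forall v, lt v w -> exists u, lt v u /\ lt u w) /\
     exists v (H : lt v w), rec v H chi).

Lemma stages_exist (base : fset Sg) F :
  well_order lt -> exists s, stages lt base F s.
Proof.
  intros [Hwf [Htr Htri]].
  set (t := Fix Hwf (fun _ => fset Sg) (step base F)).
  assert (Ht : forall w, t w = step base F w (fun v _ => t v)).
  { intro w. unfold t. apply (Fix_eq Hwf (fun _ => fset Sg) (step base F)). intros x f g Hfg.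
    assert (f = g) as ->; [|reflexivity].
    apply functional_extensionality_dep; intro y.
    apply functional_extensionality_dep; intro Hy. apply Hfg. }
  exists t. intro w. split; [|split].
  - intros Hn chi. rewrite Ht. unfold step. split.
    + intros [[_ Hb]|[[v [Hv _]]|[[v Hv] _]]]; auto; exfalso; apply (Hn v Hv).
    + intro Hb; left; auto.
  - intros v Hv Hm chi. rewrite Ht. unfold step. split.
    + intros [[Hn _]|[[v' [Hv' [Hm' Hc]]]|[_ [Hl _]]]].
      * exfalso; apply (Hn v Hv).
      * destruct (Htri v v') as [Hlt|[->|Hlt]].
        -- exfalso; apply (Hm v'); auto.
        -- exact Hc.
        -- exfalso; apply (Hm' v); auto.
      * destruct (Hl v Hv) as [u Hu]. exfalso; apply (Hm u Hu).
    + intro Hc. right; left. exists v, Hv. auto.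
  - intros Hex Hl chi. rewrite Ht. unfold step. split.
    + intros [[Hn _]|[[v' [Hv' [Hm' Hc]]]|[_ [_ [v [Hv Hc]]]]]].
      * destruct Hex as [v Hv]; exfalso; apply (Hn v Hv).
      * destruct (Hl v' Hv') as [u Hu]. exfalso; apply (Hm' u Hu).
      * exists v; auto.
    + intros [v [Hv Hc]]. right; right. split; auto. split; auto. exists v, Hv; auto.
Qed.

End Stages.
End Proofs.

Theorem mainTheorem15 (Sg : signature) (T : fset Sg) (xs : list nat) (p : fset Sg) :
  (forall s, T s -> sentence s) ->
  is_type_over T xs p ->
  forall phi sigma : formula Sg, sentence phi -> sentence sigma ->
    (brack_inf xs p T (FImp phi sigma) <-> brack_inf xs p (add T phi) sigma).
Proof.
  intros _ _ phi sigma Hphi Hsig. unfold brack_inf. split.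
  - intros [W [lt [s [w [Hwo [Hst Hw]]]]]].
    exists W, lt, (fun w => sp Sg phi (s w)), w. split; [exact Hwo|]. split.
    + apply stages_sp; auto. apply Hwo.
    + split; auto.
  - intros [W [lt [s [w [Hwo [Hst Hw]]]]]].
    destruct (stages_exist Sg W lt (Th T) (brack_p xs p) Hwo) as [t Ht].
    exists W, lt, t, w. split; [exact Hwo|]. split; [exact Ht|].
    assert (Ht' := stages_sp Sg xs p W lt t T phi Hphi (proj1 Hwo) Ht).
    assert (E := stages_unique Sg W lt (Th (add T phi)) (brack_p xs p) _ _ (proj1 Hwo)
                   (brack_seteq Sg xs p) Ht' Hst w sigma).
    apply E in Hw. apply Hw.
Qed.
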